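(* Let $(X,r)$ be a square-free non-degenerate symmetric set (of arbitrary cardinality, with $S(X,r)$ embedded in $G(X,r)$) which is not the trivial solution, and suppose its associated symmetric group $(G,r_G)$ satisfies lri. Then (1) for each orbit $X_i$ of the left action of $G$ on $X$, the induced solution on $X_i$ is the trivial solution or a one-element solution; and (2) $\mathrm{mpl}(X,r)=\mathrm{mpl}(G,r_G)=2$.
   Context: A symmetric set is $(X,r)$, $r(x,y)=({}^xy,x^y)$ a non-degenerate, involutive bijection of $X\times X$ with $r^{12}r^{23}r^{12}=r^{23}r^{12}r^{23}$; square-free if $r(x,x)=(x,x)$; trivial if $r(x,y)=(y,x)$. $S(X,r)$, $G(X,r)$: monoid, group generated by $X$ with relations $xy=zt$ whenever $r(x,y)=(z,t)\ne(x,y)$. A symmetric group is $(G,\sigma)$, $\sigma(u,v)=({}^uv,u^v)$ involutive with ${}^a1=1,{}^1u=u,1^u=1,a^1=a$, ${}^{ab}u={}^a({}^bu)$, $a^{uv}=(a^u)^v$, ${}^a(uv)=({}^au)({}^{a^u}v)$, $(ab)^u=(a^{{}^bu})(b^u)$, $uv=({}^uv)(u^v)$; $(G,r_G)$ is $G(X,r)$ with the unique such braiding extending $r$. lri on $(G,r_G)$: $({}^ab)^a=b={}^a(b^a)$ for all $a,b\in G$. Retraction: $x\sim y$ iff ${}^xz={}^yz$ for all $z$, with induced map; $\mathrm{mpl}=m$ iff $m$ minimal with the $m$-fold retraction a one-element set. *)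

(* Defs.v *)
From mathcomp Require Import all_boot.
From Stdlib Require Import Relations.Relation_Operators.
Set Implicit Arguments. Unset Strict Implicit. Unset Printing Implicit Defensive.

(* ---------- Symmetric sets (X,r), r(x,y) = (lX x y, rX x y) = (^x y, x^y) ---------- *)

Definition r_of {X : Type} (lX rX : X -> X -> X) (p : X * X) : X * X :=
  (lX p.1 p.2, rX p.1 p.2).

Definition r12 {X : Type} (lX rX : X -> X -> X) (t : X * X * X) : X * X * X :=
  let: (a, b, c) := t in let: (a', b') := r_of lX rX (a, b) in (a', b', c).
Definition r23 {X : Type} (lX rX : X -> X -> X) (t : X * X * X) : X * X * X :=
  let: (a, b, c) := t in let: (b', c') := r_of lX rX (b, c) in (a, b', c').

Definition symmetric_set {X : Type} (lX rX : X -> X -> X) : Prop :=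
  [/\ (forall x, bijective (lX x)),
      (forall y, bijective (fun x => rX x y)),
      (forall p, r_of lX rX (r_of lX rX p) = p)
    & (forall t, r12 lX rX (r23 lX rX (r12 lX rX t)) = r23 lX rX (r12 lX rX (r23 lX rX t)))].

Definition square_free {X : Type} (lX rX : X -> X -> X) : Prop :=
  forall x, r_of lX rX (x, x) = (x, x).

Definition trivial_solution {X : Type} (lX rX : X -> X -> X) : Prop :=
  forall x y, r_of lX rX (x, y) = (y, x).

Record grp (G : Type) := Group {
  gmul : G -> G -> G;
  gone : G;
  ginv : G -> G;
  gmulA : forall a b c, gmul a (gmul b c) = gmul (gmul a b) c;
  gmul1g : forall a, gmul gone a = a;
  gmulg1 : forall a, gmul a gone = a;
  gmulVg : forall a, gmul (ginv a) a = gone;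
  gmulgV : forall a, gmul a (ginv a) = gone }.

Definition group_hom {G H : Type} (gG : grp G) (gH : grp H) (h : G -> H) : Prop :=
  forall a b, h (gmul gG a b) = gmul gH (h a) (h b).

Definition respects_rel {X H : Type} (lX rX : X -> X -> X) (gH : grp H) (f : X -> H) :=
  forall x y, gmul gH (f x) (f y) = gmul gH (f (lX x y)) (f (rX x y)).

(* (G, gG, iota) is the group G(X,r) = < X | xy = zt whenever r(x,y) = (z,t) >,
   given by its universal property. *)
Definition is_GXr {X G : Type} (lX rX : X -> X -> X) (gG : grp G) (iota : X -> G) : Prop :=
  respects_rel lX rX gG iota /\
  forall (H : Type) (gH : grp H) (f : X -> H), respects_rel lX rX gH f ->
    exists h : G -> H, [/\ group_hom gG gH h, (forall x, h (iota x) = f x)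
      & forall h', group_hom gG gH h' -> (forall x, h' (iota x) = f x) -> forall a, h' a = h a].

(* The monoid S(X,r): words modulo the congruence generated by xy = zt, r(x,y)=(z,t). *)
Inductive S_step {X : Type} (lX rX : X -> X -> X) : seq X -> seq X -> Prop :=
  | S_step_intro (u v : seq X) (x y : X) :
      S_step lX rX (u ++ [:: x; y] ++ v) (u ++ [:: lX x y; rX x y] ++ v).

Definition S_equiv {X : Type} (lX rX : X -> X -> X) : seq X -> seq X -> Prop :=
  clos_refl_sym_trans (seq X) (S_step lX rX).

Definition word_prod {X G : Type} (gG : grp G) (iota : X -> G) (w : seq X) : G :=
  foldr (fun x acc => gmul gG (iota x) acc) (gone gG) w.

Definition S_embeds {X G : Type} (lX rX : X -> X -> X) (gG : grp G) (iota : X -> G) : Prop :=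
  forall w1 w2, word_prod gG iota w1 = word_prod gG iota w2 -> S_equiv lX rX w1 w2.

(* ---------- Symmetric groups (G, sigma), sigma(u,v) = (lG u v, rG u v) = (^u v, u^v) ---------- *)

Definition symmetric_group {G : Type} (gG : grp G) (lG rG : G -> G -> G) : Prop :=
  let mul := gmul gG in let one := gone gG in
  (forall u v, lG (lG u v) (rG u v) = u /\ rG (lG u v) (rG u v) = v) /\
  ((forall a, lG a one = one) /\ (forall u, lG one u = u)) /\
  ((forall u, rG one u = one) /\ (forall a, rG a one = a)) /\
  (forall a b u, lG (mul a b) u = lG a (lG b u)) /\
  (forall a u v, rG a (mul u v) = rG (rG a u) v) /\
  (forall a u v, lG a (mul u v) = mul (lG a u) (lG (rG a u) v)) /\
  (forall a b u, rG (mul a b) u = mul (rG a (lG b u)) (rG b u)) /\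
  (forall u v, mul u v = mul (lG u v) (rG u v)).

Definition extends_r {X G : Type} (lX rX : X -> X -> X) (iota : X -> G) (lG rG : G -> G -> G) :=
  forall x y, lG (iota x) (iota y) = iota (lX x y) /\ rG (iota x) (iota y) = iota (rX x y).

Definition lri {G : Type} (lG rG : G -> G -> G) : Prop :=
  forall a b, rG (lG a b) a = b /\ lG a (rG b a) = b.

(* The m-fold retraction Ret^m is presented as the setoid (T, ret_rel act m):
   Ret^0 = (T, =); Ret^{k+1} = Ret(Ret^k) identifies [x],[y] iff ^[x][z] = ^[y][z]
   for all [z] in Ret^k, with the induced left action ^[x][z] = [^x z]. *)
Fixpoint ret_rel {T : Type} (act : T -> T -> T) (m : nat) : T -> T -> Prop :=
  match m with
  | 0 => fun x y => x = y
  | k.+1 => fun x y => forall z, ret_rel act k (act x z) (act y z)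
  end.

Definition ret_one_element {T : Type} (act : T -> T -> T) (m : nat) : Prop :=
  inhabited T /\ forall x y, ret_rel act m x y.

Definition mpl_eq {T : Type} (act : T -> T -> T) (m : nat) : Prop :=
  ret_one_element act m /\ forall k, k < m -> ~ ret_one_element act k.

Definition lact_orbit {X G : Type} (iota : X -> G) (lG : G -> G -> G) (y z : X) : Prop :=
  exists a : G, iota z = lG a (iota y).

(* Main.v *)
Require Import Defs.
From mathcomp Require Import all_boot.
From Stdlib Require Import ProofIrrelevance Classical Lia.
From mathcomp Require Import zify.
From Stdlib Require Import Relations.Relation_Operators.

Lemma sig_eq_pi (T : Type) (P : T -> Prop) (u v : {a : T | P a}) :
  proj1_sig u = proj1_sig v -> u = v.
Proof.
case: u => a pa; case: v => b pb /= E; subst b; f_equal; apply: proof_irrelevance.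
Qed.

Lemma gen_ind (X G : Type) (lX rX : X -> X -> X) (gG : grp G) (iota : X -> G)
  (HG : is_GXr lX rX gG iota) (P : G -> Prop) :
  P (gone gG) -> (forall a b, P a -> P b -> P (gmul gG a b)) ->
  (forall a, P a -> P (ginv gG a)) -> (forall x, P (iota x)) -> forall a, P a.
Proof.
move=> P1 PM PV PX.
case: HG => Hresp HU.
pose H := {a : G | P a}.
pose hmul (u v : H) : H := exist _ (gmul gG (proj1_sig u) (proj1_sig v))
   (PM _ _ (proj2_sig u) (proj2_sig v)).
pose hone : H := exist _ (gone gG) P1.
pose hinv (u : H) : H := exist _ (ginv gG (proj1_sig u)) (PV _ (proj2_sig u)).
have hA : forall a b c, hmul a (hmul b c) = hmul (hmul a b) c.
  by move=> *; apply: sig_eq_pi; exact: gmulA.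
have h1 : forall a, hmul hone a = a.
  by move=> *; apply: sig_eq_pi; exact: gmul1g.
have h2 : forall a, hmul a hone = a.
  by move=> *; apply: sig_eq_pi; exact: gmulg1.
have h3 : forall a, hmul (hinv a) a = hone.
  by move=> *; apply: sig_eq_pi; exact: gmulVg.
have h4 : forall a, hmul a (hinv a) = hone.
  by move=> *; apply: sig_eq_pi; exact: gmulgV.
pose gH := @Defs.Group H hmul hone hinv hA h1 h2 h3 h4.
pose f (x : X) : H := exist _ (iota x) (PX x).
have Hf : respects_rel lX rX gH f.
  by move=> x y; apply: sig_eq_pi; exact: Hresp.
have [h [hh hx _]] := HU H gH f Hf.
have [h0 [_ _ h0u]] := HU G gG iota Hresp.
pose k (a : G) := proj1_sig (h a).
have kh : group_hom gG gG k by move=> a b; rewrite /k hh.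
have kx : forall x, k (iota x) = iota x by move=> x; rewrite /k hx.
have idh : group_hom gG gG id by [].
move=> a.
have E1 := h0u k kh kx a.
have E2 := h0u id idh (fun _ => erefl) a.
have -> : a = k a by rewrite E1 -E2.
exact: proj2_sig.
Qed.

Lemma S_equiv_inv (X : Type) (lX rX : X -> X -> X) (Q : seq X -> Prop) :
  (forall w1 w2, S_step lX rX w1 w2 -> (Q w1 <-> Q w2)) ->
  forall w1 w2, S_equiv lX rX w1 w2 -> (Q w1 <-> Q w2).
Proof.
move=> Hs w1 w2; elim=> {w1 w2}.
- by move=> ???; apply: Hs.
- by [].
- by move=> ??? H; split=> ?; apply/H.
- by move=> ??? _ H1 _ H2; split=> ?; [apply/H2/H1|apply/H1/H2].
Qed.

Lemma size_step (X : Type) (lX rX : X -> X -> X) w1 w2 :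
  S_step lX rX w1 w2 -> 2 <= size w1 /\ size w1 = size w2 /\ (size w1 = 2 -> exists x y, w1 = [:: x; y] /\ w2 = [:: lX x y; rX x y]).
Proof.
case=> u v x y; rewrite !size_cat /=; split; first by lia.
split=> // E.
have : size u + size v = 0 by lia.
case: u {E} => [|? ?] //; case: v => [|? ?] //= _.
by exists x, y.
Qed.

Lemma iota_inj (X G : Type) (lX rX : X -> X -> X) (gG : grp G) (iota : X -> G) :
  S_embeds lX rX gG iota -> forall x y, iota x = iota y -> x = y.
Proof.
move=> He x y E.
have : S_equiv lX rX [:: x] [:: y] by apply: He; rewrite /= E.
move/(@S_equiv_inv _ lX rX (fun w => w = [:: x])) => H.
suff: [:: y] = [:: x] by case.
apply/H => //.
move=> w1 w2 /size_step [H2 [Es _]]; split=> Ew.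
  by move: H2; rewrite Ew.
by move: H2; rewrite Es Ew.
Qed.

Lemma two_letter (X G : Type) (lX rX : X -> X -> X) (gG : grp G) (iota : X -> G) :
  (forall p, r_of lX rX (r_of lX rX p) = p) ->
  S_embeds lX rX gG iota -> forall p q s t,
  gmul gG (iota p) (iota q) = gmul gG (iota s) (iota t) ->
  (p = s /\ q = t) \/ (p = lX s t /\ q = rX s t).
Proof.
move=> Hinv He p q s t E.
have : S_equiv lX rX [:: p; q] [:: s; t] by apply: He; rewrite /= !gmulg1.
pose Q w := w = [:: s; t] \/ w = [:: lX s t; rX s t].
move/(@S_equiv_inv _ lX rX Q) => H.
have : Q [:: p; q].
  apply/H; last by left.
  move=> w1 w2 /size_step [_ [Es Ec]].
  have Qs : forall w, Q w -> size w = 2 by move=> w [->|->].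
  split=> Qw.
    have [x [y [E1 E2]]] := Ec (Qs _ Qw); subst w1 w2.
    case: Qw => [[-> ->]|[-> ->]]; [right|left] => //.
    have := Hinv (s, t); rewrite /r_of /= => [[-> ->]] //.
  have [x [y [E1 E2]]] := Ec (etrans Es (Qs _ Qw)); subst w1 w2.
  case: Qw => [[E1 E2]|[E1 E2]].
    have Hxy := Hinv (x, y); rewrite /r_of /= E1 E2 in Hxy.
    by right; case: Hxy => -> ->.
  have Hxy := Hinv (x, y); have Hst := Hinv (s, t).
  rewrite /r_of /= E1 E2 in Hxy Hst; rewrite Hst in Hxy.
  by left; case: Hxy => -> ->.
by case=> [[-> ->]|[-> ->]]; [left|right].
Qed.

Arguments gen_ind {X G lX rX gG iota}.
Arguments two_letter {X G lX rX gG iota}.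

Theorem mainTheorem15
  (X : Type) (lX rX : X -> X -> X)
  (G : Type) (gG : grp G) (iota : X -> G) (lG rG : G -> G -> G) :
  symmetric_set lX rX ->
  square_free lX rX ->
  ~ trivial_solution lX rX ->
  is_GXr lX rX gG iota ->
  S_embeds lX rX gG iota ->
  symmetric_group gG lG rG ->
  extends_r lX rX iota lG rG ->
  lri lG rG ->
  (forall y : X,
     (forall z w, lact_orbit iota lG y z -> lact_orbit iota lG y w ->
        r_of lX rX (z, w) = (w, z))
     \/ (forall z w, lact_orbit iota lG y z -> lact_orbit iota lG y w -> z = w))
  /\ mpl_eq lX 2 /\ mpl_eq lG 2.
Proof.
move=> Hss Hsf Hnt HG Hemb Hsg Hext Hlri.
case: Hss => HbL _ Hinv _.
have HsqL x : lX x x = x by have := Hsf x; case.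
have HsqR x : rX x x = x by have := Hsf x; case.
move: Hsg; rewrite /symmetric_group /=.
move=> [Hinvg [[HL1 HL2] [[HR1 HR2] [HML1 [HMR1 [HML2 [HMR2 HM3]]]]]]].
have inj := @iota_inj _ _ lX rX gG iota Hemb.
have two := two_letter Hinv Hemb.
have HLx x y : lG (iota x) (iota y) = iota (lX x y) by case: (Hext x y).
have HRx x y : rG (iota x) (iota y) = iota (rX x y) by case: (Hext x y).
have LV a u : lG (ginv gG a) (lG a u) = u by rewrite -HML1 gmulVg HL2.
have LV' a u : lG a (lG (ginv gG a) u) = u by rewrite -HML1 gmulgV HL2.
have Linj a u v : lG a u = lG a v -> u = v by move=> E; rewrite -(LV a u) E LV.
have canc a u v : gmul gG a u = gmul gG a v -> u = v.
  move=> E; by rewrite -(gmul1g gG u) -(gmulVg gG a) -gmulA E gmulA gmulVg gmul1g.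
have invU a b : gmul gG a b = gone gG -> b = ginv gG a.
  by move=> E; apply: (canc a); rewrite E gmulgV.
have invK a : ginv gG (ginv gG a) = a by apply/esym/invU; exact: gmulVg.
have Rdef u v : rG u v = lG (ginv gG v) u.
  by apply: (Linj v); rewrite LV'; case: (Hlri v u).
have I2 u v : lG (rG u v) v = lG u v.
  have E := (Hinvg u v).2.
  by have := (Hlri (rG u v) (lG u v)).2; rewrite E.
have I2' v w : lG (lG v w) v = lG w v.
  by rewrite -I2; case: (Hlri v w) => ->.
have IP u v : lG u (ginv gG v) = ginv gG (lG u v).
  have H1 u' : lG (rG u' v) (ginv gG v) = ginv gG (lG u' v).
    apply: invU; rewrite -HML2 gmulgV; exact: HL1.
  by have := H1 (lG v u); case: (Hlri v u) => -> _; rewrite I2'.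
have genP := gen_ind HG.
have FM : forall c x, (exists z, lG c (iota x) = iota z) /\ (exists z, lG c (iota z) = iota x).
  apply: (genP (fun c => forall x, (exists z, lG c (iota x) = iota z) /\ (exists z, lG c (iota z) = iota x))).
  - by move=> x; split; exists x; rewrite HL2.
  - move=> a b Pa Pb x; split.
      have [[z1 E1] _] := Pb x; have [[z2 E2] _] := Pa z1.
      by exists z2; rewrite HML1 E1 E2.
    have [_ [z1 E1]] := Pa x; have [_ [z2 E2]] := Pb z1.
    by exists z2; rewrite HML1 E2 E1.
  - move=> a Pa x; split.
      have [_ [z E]] := Pa x; exists z; by rewrite -E LV.
    have [[z E] _] := Pa x; exists z; by rewrite -E LV.
  - move=> u x; split; first by exists (lX u x); rewrite HLx.
    case: (HbL u) => g _ Hg; exists (g x); by rewrite HLx Hg.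
have FA0 w p : lG (rG (iota w) p) (iota w) = iota w.
  set w' := iota w.
  have Hww : lG w' w' = w' by rewrite /w' HLx HsqL.
  have Hrww : rG w' w' = w' by rewrite /w' HRx HsqR.
  pose b' := lG w' p.
  have E1 : rG (gmul gG b' w') w' = gmul gG (rG b' w') w' by rewrite HMR2 Hww Hrww.
  have E2 : lG w' (rG (gmul gG b' w') w') = gmul gG b' w' by case: (Hlri w' (gmul gG b' w')).
  rewrite E1 HML2 in E2.
  have E3 : lG w' (rG b' w') = b' by case: (Hlri w' b').
  rewrite E3 in E2; have E4 := canc _ _ _ E2.
  by move: E4; rewrite /b'; case: (Hlri w' p) => -> _.
have FA w q : lG (lG q (iota w)) (iota w) = iota w.
  by have := FA0 w (ginv gG q); rewrite Rdef invK.
have Orb z w c : iota z = lG c (iota w) -> lX z w = w /\ rX z w = z.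
  move=> Ez.
  have E1 : lG (iota z) (iota w) = iota w by rewrite Ez FA.
  have Ew : iota w = lG (ginv gG c) (iota z) by rewrite Ez LV.
  have E2 : lG (iota w) (iota z) = iota z by rewrite {1}Ew FA.
  split; apply: inj; first by rewrite -HLx.
  rewrite -HRx Rdef.
  by rewrite -{1}E2 LV.
have KB x u1 u2 : lG (iota x) (rG (iota u1) (lG (iota u2) (iota x))) = iota u1.
  set x' := iota x; set u1' := iota u1; set u2' := iota u2.
  set y' := lG u2' x'; set A := rG u1' y'; set B := rG u2' x'.
  have E : gmul gG u1' u2' = gmul gG (lG x' A) (lG (rG x' A) B).
    have := (Hlri x' (gmul gG u1' u2')).2.
    by rewrite HMR2 HML2 => ->.
  have Ey : y' = iota (lX u2 x) by rewrite /y' HLx.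
  have EA : A = iota (rX u1 (lX u2 x)) by rewrite /A Ey HRx.
  have EB : B = iota (rX u2 x) by rewrite /B HRx.
  have T := E; rewrite EA EB !HRx !HLx in T; move/esym/two: T.
  case=> [[E1 _]|[Ep Eq]]; first by rewrite EA HLx E1.
  have Ep' : lG x' A = lG u1' u2' by rewrite EA HLx Ep HLx.
  have Eq' : lG (rG x' A) B = rG u1' u2' by rewrite EA EB HRx HLx Eq HRx.
  have HyA : lG y' A = u1' by case: (Hlri y' u1').
  have Eu1 : u1' = lG (gmul gG y' (gmul gG (ginv gG x') u1')) u2'.
    by rewrite !HML1 -Ep' LV HyA.
  have F1 : lG u1' u2' = u2' by rewrite {1}Eu1 FA.
  have F2 : lG u2' u1' = u1'.
    have -> : u2' = lG (ginv gG (gmul gG y' (gmul gG (ginv gG x') u1'))) u1'.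
      by rewrite {2}Eu1 LV.
    by rewrite FA.
  have Ep2 : lG x' A = u2' by rewrite Ep' F1.
  have Er : rG u1' u2' = u1' by rewrite Rdef -{1}F2 LV.
  have EBA : B = A by rewrite /B Rdef -Ep2 LV.
  by rewrite -I2 -{2}EBA Eq' Er.
have FB x u2 t : lG (iota (lX u2 x)) (iota t) = lG (iota x) (iota t).
  have := KB x (lX (lX u2 x) t) u2.
  rewrite HLx -HLx; case: (Hlri (iota (lX u2 x)) (iota t)) => -> _.
  by move=> ->.
have FB' c x t : lG (lG c (iota x)) (iota t) = lG (iota x) (iota t).
  move: c x t; apply: (genP (fun c => forall x t, lG (lG c (iota x)) (iota t) = lG (iota x) (iota t))).
  - by move=> x t; rewrite HL2.
  - move=> a b Pa Pb x t.
    have [[z E] _] := FM b x.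
    by rewrite HML1 E Pa -E Pb.
  - move=> a Pa x t.
    have [[z E] _] := FM (ginv gG a) x.
    have E' : lG a (iota z) = iota x by rewrite -E LV'.
    by rewrite E -E' Pa.
  - by move=> u x t; rewrite HLx FB.
have FC c b t : lG (lG b c) (iota t) = lG c (iota t).
  move: c b t; apply: (genP (fun c => forall b t, lG (lG b c) (iota t) = lG c (iota t))).
  - by move=> b t; rewrite HL1.
  - move=> c1 c2 P1 P2 b t.
    rewrite HML2 HML1 P2.
    have [[z E] _] := FM c2 t.
    by rewrite E P1 -E HML1.
  - move=> c Pc b t.
    rewrite IP.
    have [[z E] _] := FM (ginv gG c) t.
    have E' : lG c (iota z) = iota t by rewrite -E LV'.
    by rewrite E -E' -(Pc b z) LV.
  - by move=> u b t; rewrite FB'.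
have FN u g : (forall t, lG g (iota t) = iota t) -> lG g u = u.
  move: u g; apply: (genP (fun u => forall g, (forall t, lG g (iota t) = iota t) -> lG g u = u)).
  - by move=> g _; rewrite HL1.
  - move=> u v Pu Pv g Hg.
    rewrite HML2 (Pu g Hg) Rdef Pv //.
    by move=> t; rewrite FC Hg.
  - by move=> u Pu g Hg; rewrite IP Pu.
  - by move=> x g Hg.
have FD a c d : lG (lG a c) d = lG c d.
  pose g := gmul gG (ginv gG c) (lG a c).
  have Hg : lG g d = d.
    by apply: FN => t; rewrite /g HML1 FC LV.
  have -> : lG a c = gmul gG c g by rewrite /g gmulA gmulgV gmul1g.
  by rewrite HML1 Hg.
split.
  move=> y; left=> z w [a Ez] [b Ew].
  have Ez' : iota z = lG (gmul gG a (ginv gG b)) (iota w).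
    by rewrite Ew HML1 LV Ez.
  by have [E1 E2] := Orb z w _ Ez'; rewrite /r_of /= E1 E2.
have inhX : inhabited X.
  case: (classic (inhabited X)) => // nI; exfalso; apply: Hnt => x.
  by case: nI; constructor.
split.
  split.
    split=> // x y z w /=.
    by apply: inj; rewrite -!HLx !FB'.
  case=> [|[|k]] // _ [_ H1]; apply: Hnt => x y.
    have E : forall x y, lX x y = y.
      by move=> a b; rewrite (H1 a b) HsqL.
    rewrite /r_of /= E; congr pair; apply: inj.
    by rewrite -HRx Rdef -{1}(E y x) -HLx LV.
  have E : forall x y, lX x y = y.
    by move=> a b; rewrite (H1 a b b) HsqL.
  rewrite /r_of /= E; congr pair; apply: inj.
  by rewrite -HRx Rdef -{1}(E y x) -HLx LV.
split.
  split; first by constructor; exact: gone gG.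
  by move=> a b c d /=; rewrite !FD.
case=> [|[|k]] // _ [_ H1]; apply: Hnt => x y.
  have E : forall a b, lG a b = b.
    by move=> a b; rewrite (H1 a (gone gG)) HL2.
  rewrite /r_of /=; congr pair; apply: inj.
    by rewrite -HLx E.
  by rewrite -HRx Rdef E.
have E : forall a b, lG a b = b.
  by move=> a b; rewrite (H1 a (gone gG) b) HL2.
rewrite /r_of /=; congr pair; apply: inj.
  by rewrite -HLx E.
by rewrite -HRx Rdef E.
Qed.
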